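(* For every $F>0$ and every $v\in\mathcal U_0$, $$(E^{\rm ecc})'(Fx;v)=0,$$ where $E^{\rm ecc}(y)=\sum_{b\in\mathcal B,\ b\not\subset\Omega_c}e_b(y)+\sum_{b\in\mathcal B,\ b\subset\Omega_c}c_b(y)$.
   Context: One-dimensional setting. Fix integers $N\ge 1$, $R\ge 1$. Let $\Omega=(-N-R,N+R)$, $\Omega_c=(0,N)$, $\Omega_a=\Omega\setminus[0,N]$, $\mathcal I=\Omega\cap\mathbb Z$, $\mathcal I_a=\Omega_a\cap\mathbb Z$, $\mathcal I_D=\{i\in\mathbb Z: N\le |i|<N+R\}$. Let $\mathcal U$ be the set of real-valued functions $y$ on $\mathcal I_a\cup[0,N]$ whose restriction to $(0,N)$ lies in $W^{1,\infty}(0,N)$ (identified with its continuous representative on $[0,N]$); write $y_i=y(i)$. Let $\mathcal U_0=\{u\in\mathcal U: u_i=0 \text{ for all } i\in\mathcal I_D\}$. For $F\in\mathbb R$, $Fx$ denotes the element $y\in\mathcal U$ with $y(x)=Fx$. Let $\varphi:\mathbb R\to\mathbb R$ be continuously differentiable. A bond $(i,i+r)$ ($i\in\mathbb Z$, $r\ge1$) is the open interval from $i$ to $i+r$; $\mathcal B=\{(i,i+r): 1\le r\le R,\ i\in\mathcal I,\ i+r\in\mathcal I\}$. Exact contribution of $b=(i,i+r)$: $e_b(y)=\varphi(y_{i+r}-y_i)$. Continuum contribution: $c_b(y)=\frac1r\int_{b\cap\Omega_c}\varphi(r\,y'(x))\,dx$. For a functional $G$ on $\mathcal U$, $G'(y;v)=\frac{d}{dt}G(y+tv)\big|_{t=0}$.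 *)

(* Defs.v *)
From Stdlib Require Import Reals Lra Lia ZArith List ClassicalEpsilon.
Import ListNotations.
Open Scope R_scope.

(** A real-valued function on the reals represents an element y of U:
    only its values on I_a (integers) and on [0,N] matter. *)

(** Restriction to (0,N) is in W^{1,oo}(0,N), identified with its continuous
    representative on [0,N]: equivalently, Lipschitz on [0,N]. *)
Definition lip_on (a b : R) (y : R -> R) : Prop :=
  exists L : R, forall x z, a <= x <= b -> a <= z <= b ->
    Rabs (y x - y z) <= L * Rabs (x - z).

Definition in_U (N : nat) (y : R -> R) : Prop := lip_on 0 (INR N) y.

Definition in_ID (N Rc : nat) (i : Z) : Prop :=
  (Z.of_nat N <= Z.abs i < Z.of_nat N + Z.of_nat Rc)%Z.

Definition in_U0 (N Rc : nat) (u : R -> R) : Prop :=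
  in_U N u /\ forall i : Z, in_ID N Rc i -> u (IZR i) = 0.

Definition rsum (f : R -> R) (a b : R) (n : nat) : R :=
  (b - a) / INR (S n) *
  sum_f_R0 (fun k => f (a + INR k * (b - a) / INR (S n))) n.

(** [IsDerivInt g y a b L] : L = \int_a^b g(y'(x)) dx  (Lebesgue integral, y
    Lipschitz), characterised as the limit as h -> 0+ of the Riemann integrals
    of the continuous functions x |-> g((y(x+h)-y(x))/h) over [a, b-h]
    (dominated convergence). *)
Definition IsDerivInt (g y : R -> R) (a b L : R) : Prop :=
  forall eps, 0 < eps -> exists delta, 0 < delta /\
    forall h, 0 < h < delta -> exists Lh,
      Un_cv (rsum (fun x => g ((y (x + h) - y x) / h)) a (b - h)) Lh /\
      Rabs (Lh - L) < eps.

Definition deriv_int (g y : R -> R) (a b : R) : R :=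
  epsilon (inhabits 0) (IsDerivInt g y a b).

Definition e_bond (phi : R -> R) (y : R -> R) (i : Z) (r : nat) : R :=
  phi (y (IZR (i + Z.of_nat r)) - y (IZR i)).

(** Continuum contribution of a bond b = (i,i+r) contained in Omega_c:
    c_b(y) = 1/r \int_i^{i+r} phi(r y'(x)) dx  (here b ∩ Omega_c = b). *)
Definition c_bond (phi : R -> R) (y : R -> R) (i : Z) (r : nat) : R :=
  / INR r * deriv_int (fun s => phi (INR r * s)) y (IZR i) (IZR (i + Z.of_nat r)).

(** b = (i,i+r) ⊂ Omega_c = (0,N)  iff  0 <= i and i + r <= N. *)
Definition bond_in_c (N : nat) (i : Z) (r : nat) : bool :=
  (0 <=? i)%Z && (i + Z.of_nat r <=? Z.of_nat N)%Z.

Definition Zrange (a b : Z) : list Z :=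
  map (fun k => (a + Z.of_nat k)%Z) (seq 0 (Z.to_nat (b - a))).

Definition Rlist_sum (l : list R) : R := fold_right Rplus 0 l.

(** E^ecc(y) = sum over bonds (i,i+r), 1 <= r <= R, i, i+r in I = (-N-R,N+R) ∩ Z. *)
Definition E_ecc (phi : R -> R) (N Rc : nat) (y : R -> R) : R :=
  let M := (Z.of_nat N + Z.of_nat Rc)%Z in
  Rlist_sum (map (fun i =>
    Rlist_sum (map (fun r =>
      if (i + Z.of_nat r <? M)%Z then
        (if bond_in_c N i r then c_bond phi y i r else e_bond phi y i r)
      else 0) (seq 1 Rc))) (Zrange (- M + 1) M)).

(* Main.v *)
Require Import Defs.
From Stdlib Require Import Reals Lra Lia ZArith List Classical ClassicalEpsilon.
From Coquelicot Require Import Coquelicot.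
Open Scope R_scope.

Definition lipg (L : R) (f : R -> R) := forall x z, Rabs (f x - f z) <= L * Rabs (x - z).

Lemma lipg_cont L f : lipg L f -> continuity f.
Proof.
  intros H x eps Heps. exists (eps / (Rabs L + 1)). split.
  - apply Rdiv_lt_0_compat; [lra | pose proof (Rabs_pos L); lra].
  - intros z [_ Hz]. simpl in *. unfold R_dist in *.
    pose proof (H z x). pose proof (Rabs_pos L). pose proof (Rabs_pos (z - x)).
    assert (L * Rabs (z - x) <= Rabs L * Rabs (z-x)) by (apply Rmult_le_compat_r; [lra| apply Rle_abs]).
    assert (Rabs L * Rabs (z - x) <= Rabs L * (eps / (Rabs L + 1))) by (apply Rmult_le_compat_l; lra).
    assert (Rabs L * (eps / (Rabs L + 1)) < eps).
    { apply (Rmult_lt_reg_r (Rabs L + 1)); [lra|]. field_simplify; [nra|lra]. }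
    lra.
Qed.

Lemma cont_continuous f x : continuity f -> continuous f x.
Proof. intros H. apply continuity_pt_filterlim. apply H. Qed.

Lemma exR f a b : continuity f -> ex_RInt f a b.
Proof. intros H. apply (ex_RInt_continuous (V:=R_CompleteNormedModule)). intros; apply cont_continuous; auto. Qed.

Lemma RI_plus f g a b : continuity f -> continuity g ->
  RInt (fun x => f x + g x) a b = RInt f a b + RInt g a b.
Proof. intros; apply (RInt_plus f g a b); apply exR; auto. Qed.

Lemma RI_scal f c a b : continuity f -> RInt (fun x => c * f x) a b = c * RInt f a b.
Proof. intros; apply (RInt_scal f a b c); apply exR; auto. Qed.

Lemma RI_minus f g a b : continuity f -> continuity g ->
  RInt (fun x => f x - g x) a b = RInt f a b - RInt g a b.
Proof. intros; apply (RInt_minus f g a b); apply exR; auto. Qed.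

Lemma RI_const c a b : RInt (fun _ => c) a b = (b - a) * c.
Proof. rewrite RInt_const. reflexivity. Qed.

Lemma RI_chasles f a b c : continuity f -> RInt f a b + RInt f b c = RInt f a c.
Proof. intros; apply (RInt_Chasles f a b c); apply exR; auto. Qed.

Lemma RI_le f g a b : a <= b -> continuity f -> continuity g ->
  (forall x, a <= x <= b -> f x <= g x) -> RInt f a b <= RInt g a b.
Proof. intros; apply RInt_le; auto; try apply exR; auto. intros; apply H2; lra. Qed.

Lemma RI_ge0 f a b : a <= b -> continuity f ->
  (forall x, a <= x <= b -> 0 <= f x) -> 0 <= RInt f a b.
Proof. intros; apply RInt_ge_0; auto; try apply exR; auto. intros; apply H1; lra. Qed.

Lemma RI_bound f a b M : a <= b -> continuity f ->
  (forall x, a <= x <= b -> Rabs (f x) <= M) -> Rabs (RInt f a b) <= (b - a) * M.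
Proof. intros; apply abs_RInt_le_const; auto; apply exR; auto. Qed.

Lemma RI_ext (f g : R -> R) a b : (forall x, Rmin a b <= x <= Rmax a b -> f x = g x) -> RInt (V:=R_CompleteNormedModule) f a b = RInt g a b.
Proof. intros; apply RInt_ext; intros; apply H; lra. Qed.

Lemma RI_shift f s a b : continuity f -> RInt (fun x => f (x + s)) a b = RInt f (a + s) (b + s).
Proof.
  intros H. replace (a + s) with (1 * a + s) by ring. replace (b + s) with (1 * b + s) by ring.
  rewrite <- (RInt_comp_lin f 1 s a b) by (apply exR; auto).
  apply RInt_ext. intros. unfold scal; simpl; unfold mult; simpl.
  rewrite Rmult_1_l, Rmult_1_l. reflexivity.
Qed.

Lemma chasles_sum f c d : continuity f -> forall m,
  sum_f_R0 (fun k => RInt f (c + INR k * d) (c + INR (S k) * d)) m = RInt f c (c + INR (S m) * d).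
Proof.
  intros Hf m. induction m.
  - simpl. f_equal. ring.
  - rewrite tech5, IHm. apply RI_chasles; auto.
Qed.

Lemma piece f x0 dn e : 0 <= dn -> continuity f ->
  (forall x, x0 <= x <= x0 + dn -> Rabs (f x - f x0) <= e) ->
  Rabs (RInt f x0 (x0 + dn) - dn * f x0) <= dn * e.
Proof.
  intros H0 Hf Hb.
  assert (E : dn * f x0 = RInt (fun _ => f x0) x0 (x0 + dn)).
  { rewrite RI_const. replace (x0 + dn - x0) with dn by ring. reflexivity. }
  rewrite E, <- RI_minus; auto.
  - replace (dn * e) with ((x0 + dn - x0) * e) by ring. apply RI_bound; auto. lra.
    apply continuity_minus; auto. apply continuity_const. intros ? ?; auto.
  - apply continuity_const. intros ? ?; auto.
Qed.

Lemma rsum_cv f c d : c <= d -> continuity f -> Un_cv (rsum f c d) (RInt f c d).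
Proof.
  intros Hcd Hf eps Heps.
  assert (Hu := Heine f (fun x => c <= x <= d) (compact_P3 c d) (fun x _ => Hf x)).
  set (e' := eps / (d - c + 1)).
  assert (He' : 0 < e') by (unfold e'; apply Rdiv_lt_0_compat; lra).
  destruct (Hu (mkposreal e' He')) as [[del Hdel] Hd]. simpl in Hd.
  destruct (archimed ((d - c) / del)) as [Hup _].
  assert (Hup0 : (0 <= up ((d - c) / del))%Z).
  { apply le_IZR. assert (0 <= (d - c) / del) by (apply Rdiv_le_0_compat; lra). lra. }
  exists (Z.to_nat (up ((d - c) / del))). intros n Hn. unfold R_dist.
  set (dn := (d - c) / INR (S n)).
  assert (HSn : 0 < INR (S n)) by (apply lt_0_INR; lia).
  assert (Hdn0 : 0 <= dn) by (unfold dn; apply Rdiv_le_0_compat; lra).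
  assert (Hdn : dn < del).
  { unfold dn. apply (Rmult_lt_reg_r (INR (S n))); auto. unfold Rdiv. rewrite Rmult_assoc, Rinv_l by lra.
    rewrite Rmult_1_r. assert (INR n >= IZR (up ((d - c) / del))).
    { rewrite INR_IZR_INZ. apply Rle_ge, IZR_le. lia. }
    assert ((d - c) < del * IZR (up ((d - c) / del))).
    { apply (Rmult_lt_reg_r (/ del)). apply Rinv_0_lt_compat; lra.
      replace (del * IZR (up ((d - c) / del)) * / del) with (IZR (up ((d - c) / del))) by (field; lra).
      exact Hup. }
    rewrite S_INR. nra. }
  assert (Hend : c + INR (S n) * dn = d) by (unfold dn; field; lra).
  assert (HR : RInt f c d = sum_f_R0 (fun k => RInt f (c + INR k * dn) (c + INR (S k) * dn)) n).
  { rewrite chasles_sum by auto. now rewrite Hend. }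
  assert (HS : rsum f c d n = sum_f_R0 (fun k => dn * f (c + INR k * dn)) n).
  { unfold rsum. fold dn. rewrite scal_sum. apply sum_eq. intros k _.
    rewrite Rmult_comm. f_equal. f_equal. unfold dn. field. lra. }
  rewrite HR, HS, <- minus_sum.
  eapply Rle_lt_trans. apply sum_f_R0_triangle.
  apply Rle_lt_trans with (sum_f_R0 (fun _ => dn * e') n).
  - apply sum_Rle. intros k Hk.
    assert (Hk' : INR k <= INR n) by (apply le_INR; lia).
    assert (Hxk : c <= c + INR k * dn) by (pose proof (pos_INR k); nra).
    assert (Hxk2 : c + INR (S k) * dn <= d).
    { rewrite <- Hend. apply Rplus_le_compat_l, Rmult_le_compat_r; auto. apply le_INR; lia. }
    assert (HSk : c + INR (S k) * dn = (c + INR k * dn) + dn) by (rewrite S_INR; ring).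
    rewrite HSk in *.
    rewrite <- Rabs_Ropp, Ropp_minus_distr. apply piece; auto. intros x Hx. left.
    apply Hd; try lra. rewrite Rabs_right; lra.
  - rewrite sum_cte. replace (dn * e' * INR (S n)) with ((d - c) * e') by (unfold dn; field; lra).
    unfold e'. apply (Rmult_lt_reg_r (d - c + 1)); [lra|]. field_simplify; lra.
Qed.

Definition Lim0 (P : R -> R) (l : R) := forall eps, 0 < eps -> exists del, 0 < del /\
  forall h, 0 < h < del -> Rabs (P h - l) < eps.

Lemma IsDerivInt_unique g y a b L1 L2 : IsDerivInt g y a b L1 -> IsDerivInt g y a b L2 -> L1 = L2.
Proof.
  intros H1 H2. destruct (Req_dec L1 L2) as [|Hne]; auto.
  set (e := Rabs (L1 - L2) / 3).
  assert (He : 0 < e) by (unfold e; apply Rdiv_lt_0_compat; [apply Rabs_pos_lt; lra | lra]).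
  destruct (H1 e He) as [d1 [Hd1 H1']]. destruct (H2 e He) as [d2 [Hd2 H2']].
  set (h := Rmin d1 d2 / 2).
  assert (Hh1 : 0 < h < d1) by (unfold h; pose proof (Rmin_l d1 d2); pose proof (Rmin_glb_lt d1 d2 0); split; [apply Rdiv_lt_0_compat; [apply Rmin_glb_lt|]|]; lra).
  assert (Hh2 : 0 < h < d2) by (unfold h; pose proof (Rmin_r d1 d2); pose proof (Rmin_glb_lt d1 d2 0); split; [apply Rdiv_lt_0_compat; [apply Rmin_glb_lt|]|]; lra).
  destruct (H1' h Hh1) as [M1 [C1 B1]]. destruct (H2' h Hh2) as [M2 [C2 B2]].
  rewrite (UL_sequence _ _ _ C1 C2) in B1.
  assert (Rabs (L1 - L2) <= Rabs (M2 - L1) + Rabs (M2 - L2)).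
  { replace (L1 - L2) with (-(M2 - L1) + (M2 - L2)) by ring.
    eapply Rle_trans; [apply Rabs_triang|]. rewrite Rabs_Ropp. lra. }
  unfold e in *. lra.
Qed.

Lemma deriv_int_eq g y a b L : IsDerivInt g y a b L -> deriv_int g y a b = L.
Proof.
  intros H. unfold deriv_int.
  apply (IsDerivInt_unique g y a b). apply epsilon_spec. exists L; auto. auto.
Qed.

Lemma rsum_ext f f' c d n : c <= d -> (forall x, c <= x <= d -> f x = f' x) -> rsum f c d n = rsum f' c d n.
Proof.
  intros Hcd H. unfold rsum. f_equal. apply sum_eq. intros k Hk. apply H.
  assert (0 < INR (S n)) by (apply lt_0_INR; lia).
  assert (INR k <= INR (S n)) by (apply le_INR; lia).
  pose proof (pos_INR k).
  split.
  - assert (0 <= INR k * (d - c) / INR (S n)) by (apply Rdiv_le_0_compat; [nra|lra]). lra.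
  - assert (INR k * (d - c) / INR (S n) <= d - c).
    { apply (Rmult_le_reg_r (INR (S n))); auto. field_simplify; nra. }
    lra.
Qed.

Lemma isdi g y yt a b L : a < b -> (forall x, a <= x <= b -> y x = yt x) ->
  continuity g -> continuity yt ->
  Lim0 (fun h => RInt (fun x => g ((yt (x + h) - yt x) / h)) a (b - h)) L ->
  IsDerivInt g y a b L.
Proof.
  intros Hab Hy Hg Hyt HL eps Heps.
  destruct (HL eps Heps) as [del [Hdel H]].
  exists (Rmin del (b - a)). split. apply Rmin_glb_lt; lra.
  intros h Hh. pose proof (Rmin_l del (b - a)). pose proof (Rmin_r del (b - a)).
  exists (RInt (fun x => g ((yt (x + h) - yt x) / h)) a (b - h)). split; [|apply H; lra].
  intros e He. destruct (rsum_cv (fun x => g ((yt (x + h) - yt x) / h)) a (b - h)) with (eps := e) as [N0 HN0]; auto.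
  lra.
  { apply continuity_comp; auto. apply continuity_scal_fct with (a := / h) || idtac.
    intros x. apply continuity_pt_mult.
    apply continuity_pt_minus. apply continuity_pt_comp. apply continuity_pt_plus.
    apply derivable_continuous_pt, derivable_pt_id. apply continuity_pt_const. intros ? ?; auto.
    apply Hyt. apply Hyt. apply continuity_pt_const. intros ? ?; auto. }
  exists N0. intros n Hn. rewrite (rsum_ext _ (fun x => g ((yt (x + h) - yt x) / h))). apply HN0; auto.
  lra. intros x Hx. rewrite !Hy; auto; lra.
Qed.

Definition qd (w : R -> R) (h x : R) := (w (x + h) - w x) / h.
Definition Phi (w : R -> R) (a b : R) (G : R -> R) (h : R) :=
  RInt (fun x => G (qd w h x)) a (b - h).

Lemma qd_bnd w Lw h x : lipg Lw w -> 0 < h -> Rabs (qd w h x) <= Lw.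
Proof.
  intros Hw Hh. unfold qd. rewrite Rabs_div by lra. rewrite (Rabs_right h) by lra.
  apply (Rmult_le_reg_r h); auto. unfold Rdiv; rewrite Rmult_assoc, Rinv_l, Rmult_1_r by lra.
  replace (Lw * h) with (Lw * Rabs (x + h - x)). apply Hw.
  replace (x + h - x) with h by ring. rewrite Rabs_right; lra.
Qed.

Lemma qd_lip w Lw h : lipg Lw w -> 0 <= Lw -> 0 < h -> lipg (2 * Lw / h) (qd w h).
Proof.
  intros Hw HL Hh x z. unfold qd.
  replace ((w (x + h) - w x) / h - (w (z + h) - w z) / h) with
    (((w (x + h) - w (z + h)) - (w x - w z)) / h) by (field; lra).
  rewrite Rabs_div by lra. rewrite (Rabs_right h) by lra.
  apply (Rmult_le_reg_r h); auto.
  replace (Rabs (w (x + h) - w (z + h) - (w x - w z)) / h * h) with (Rabs (w (x + h) - w (z + h) - (w x - w z))) by (field; lra).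
  replace (2 * Lw / h * Rabs (x - z) * h) with (Lw * Rabs (x + h - (z + h)) + Lw * Rabs (x - z)).
  2:{ replace (x + h - (z + h)) with (x - z) by ring. field. lra. }
  eapply Rle_trans. apply Rabs_triang. rewrite Rabs_Ropp. apply Rplus_le_compat; apply Hw.
Qed.

Lemma qd_cont w Lw h : lipg Lw w -> 0 <= Lw -> 0 < h -> continuity (qd w h).
Proof. intros; eapply lipg_cont; apply qd_lip; eauto. Qed.

Lemma Gq_cont w Lw h G : lipg Lw w -> 0 <= Lw -> 0 < h -> continuity G -> continuity (fun x => G (qd w h x)).
Proof. intros. intros x. apply (continuity_pt_comp (qd w h) G). apply (qd_cont w Lw); auto. apply H2. Qed.

Lemma sub_le f a b s t : continuity f -> (forall x, a <= x <= b -> 0 <= f x) ->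
  a <= s -> s <= t -> t <= b -> RInt f s t <= RInt f a b.
Proof.
  intros Hf Hp H1 H2 H3.
  rewrite <- (RI_chasles f a s b), <- (RI_chasles f s t b) by auto.
  assert (0 <= RInt f a s) by (apply RI_ge0; auto; intros; apply Hp; lra).
  assert (0 <= RInt f t b) by (apply RI_ge0; auto; intros; apply Hp; lra).
  lra.
Qed.

Lemma qd_split w h1 k x : 0 < h1 -> 0 < k ->
  qd w (h1 + k) x = h1 / (h1 + k) * qd w h1 x + k / (h1 + k) * qd w k (x + h1).
Proof. intros. unfold qd. replace (x + h1 + k) with (x + (h1 + k)) by ring. field. lra. Qed.

Definition convex (G : R -> R) := forall l p q, 0 <= l <= 1 -> G (l * p + (1 - l) * q) <= l * G p + (1 - l) * G q.

Lemma stepA w Lw a b G : lipg Lw w -> 0 <= Lw -> a < b -> continuity G ->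
  (forall q, 0 <= G q) -> convex G ->
  forall m k, 0 < k -> INR (S m) * k < b - a -> Phi w a b G (INR (S m) * k) <= Phi w a b G k.
Proof.
  intros Hw HL Hab HG Hp Hc m. induction m; intros k Hk Hm.
  - simpl. rewrite Rmult_1_l. lra.
  - set (h1 := INR (S m) * k).
    assert (Hh1 : 0 < h1) by (unfold h1; apply Rmult_lt_0_compat; auto; apply lt_0_INR; lia).
    assert (E : INR (S (S m)) * k = h1 + k) by (unfold h1; rewrite (S_INR (S m)); ring).
    rewrite E in *. set (h := h1 + k) in *.
    assert (Hh : 0 < h) by (unfold h; lra).
    assert (Hm1 : INR (S m) * k < b - a) by (unfold h, h1 in *; lra).
    assert (IH := IHm k Hk Hm1). fold h1 in IH.
    unfold Phi at 1.
    apply Rle_trans with (RInt (fun x => h1 / h * G (qd w h1 x) + k / h * G (qd w k (x + h1))) a (b - h)).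
    { apply RI_le. lra. apply (Gq_cont w Lw); auto.
      apply continuity_plus; apply continuity_scal; auto. apply (Gq_cont w Lw); auto.
      intros x. apply (continuity_pt_comp (fun x => x + h1) (fun y => G (qd w k y))).
      apply continuity_pt_plus. apply derivable_continuous_pt, derivable_pt_id. apply continuity_pt_const; intros ? ?; auto.
      apply (Gq_cont w Lw); auto.
      intros x _. unfold h. rewrite qd_split by auto.
      replace (k / (h1 + k)) with (1 - h1 / (h1 + k)) by (field; lra).
      apply Hc. split. apply Rdiv_le_0_compat; lra. apply (Rmult_le_reg_r (h1 + k)); [lra|]. field_simplify; lra. }
    assert (Cq1 := Gq_cont w Lw h1 G Hw HL Hh1 HG).
    assert (Cqk := Gq_cont w Lw k G Hw HL Hk HG).
    assert (Cqs : continuity (fun x => G (qd w k (x + h1)))).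
    { intros x. apply (continuity_pt_comp (fun x => x + h1) (fun y => G (qd w k y))).
      apply continuity_pt_plus. apply derivable_continuous_pt, derivable_pt_id. apply continuity_pt_const; intros ? ?; auto.
      apply Cqk. }
    rewrite RI_plus by (apply continuity_scal; auto).
    rewrite RI_scal, RI_scal by auto.
    rewrite (RI_shift (fun y => G (qd w k y))) by auto.
    assert (A1 : RInt (fun x => G (qd w h1 x)) a (b - h) <= Phi w a b G h1).
    { unfold Phi. apply sub_le; auto; unfold h in *; try lra. }
    assert (A2 : RInt (fun y => G (qd w k y)) (a + h1) (b - h + h1) <= Phi w a b G k).
    { unfold Phi. apply sub_le; auto; unfold h in *; try lra. }
    assert (0 <= h1 / h) by (apply Rdiv_le_0_compat; lra).
    assert (0 <= k / h) by (apply Rdiv_le_0_compat; lra).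
    apply Rle_trans with (h1 / h * Phi w a b G k + k / h * Phi w a b G k).
    + apply Rplus_le_compat; apply Rmult_le_compat_l; auto. lra.
    + assert (Eq : forall P : R, h1 / h * P + k / h * P = P) by (intros; unfold h; field; lra).
      rewrite Eq. lra.
Qed.

Lemma qd_diff w Lw h h' x : lipg Lw w -> 0 <= Lw -> 0 < h -> h <= h' ->
  Rabs (qd w h x - qd w h' x) <= 2 * Lw * (h' - h) / h.
Proof.
  intros Hw HL Hh Hhh.
  set (A := w (x + h) - w x). set (B := w (x + h') - w (x + h)).
  assert (E : h * h' * (qd w h x - qd w h' x) = (h' - h) * A - h * B) by (unfold qd, A, B; field; lra).
  assert (HA : Rabs A <= Lw * h).
  { unfold A. replace h with (Rabs (x + h - x)) at 2 by (replace (x + h - x) with h by ring; apply Rabs_right; lra). apply Hw. }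
  assert (HB : Rabs B <= Lw * (h' - h)).
  { unfold B. replace (h' - h) with (Rabs (x + h' - (x + h))) by (replace (x + h' - (x + h)) with (h' - h) by ring; apply Rabs_right; lra). apply Hw. }
  assert (H2 : Rabs ((h' - h) * A - h * B) <= 2 * Lw * h * (h' - h)).
  { eapply Rle_trans. apply Rabs_triang. rewrite Rabs_Ropp, !Rabs_mult, (Rabs_right (h' - h)), (Rabs_right h) by lra. nra. }
  rewrite <- E, Rabs_mult, (Rabs_right (h * h')) in H2 by nra.
  apply (Rmult_le_reg_l (h * h')). nra.
  apply Rle_trans with (2 * Lw * h * (h' - h)); auto.
  replace (h * h' * (2 * Lw * (h' - h) / h)) with (2 * Lw * h' * (h' - h)) by (field; lra).
  assert (0 <= 2 * Lw * (h' - h)) by nra. nra.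
Qed.

Definition lipG (LG : R) (G : R -> R) := forall p q, Rabs (G p - G q) <= LG * Rabs (p - q).

Lemma near_cont w Lw a b G LG M h h' : lipg Lw w -> 0 <= Lw -> a < b -> continuity G ->
  0 <= LG -> lipG LG G -> (forall q, Rabs q <= Lw -> Rabs (G q) <= M) ->
  0 < h -> h <= h' -> h' < b - a ->
  Phi w a b G h - (M + (b - a) * LG * (2 * Lw / h)) * (h' - h) <= Phi w a b G h'.
Proof.
  intros Hw HL Hab HG HLG HlG HM Hh Hhh Hh'.
  assert (C1 := Gq_cont w Lw h G Hw HL Hh HG).
  assert (C2 := Gq_cont w Lw h' G Hw HL ltac:(lra) HG).
  unfold Phi. rewrite <- (RI_chasles _ a (b - h') (b - h)) by auto.
  assert (B1 : Rabs (RInt (fun x => G (qd w h x)) (b - h') (b - h)) <= (b - h - (b - h')) * M).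
  { apply RI_bound; auto. lra. intros; apply HM. apply (qd_bnd w Lw); auto. }
  assert (B2 : Rabs (RInt (fun x => G (qd w h x) - G (qd w h' x)) a (b - h')) <= (b - h' - a) * (LG * (2 * Lw * (h' - h) / h))).
  { apply RI_bound. lra. apply continuity_minus; auto.
    intros x _. eapply Rle_trans. apply HlG. apply Rmult_le_compat_l; auto. apply (qd_diff w Lw); auto. }
  rewrite RI_minus in B2 by auto.
  assert (0 <= LG * (2 * Lw * (h' - h) / h)).
  { apply Rmult_le_pos; auto. apply Rdiv_le_0_compat; nra. }
  assert ((b - h' - a) * (LG * (2 * Lw * (h' - h) / h)) <= (b - a) * LG * (2 * Lw / h) * (h' - h)).
  { replace ((b - a) * LG * (2 * Lw / h) * (h' - h)) with ((b - a) * (LG * (2 * Lw * (h' - h) / h))) by (field; lra).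
    apply Rmult_le_compat_r; auto. lra. }
  apply Rabs_le_between in B1. apply Rabs_le_between in B2. nra.
Qed.

Lemma stepB w Lw a b G LG M : lipg Lw w -> 0 <= Lw -> a < b -> continuity G ->
  (forall q, 0 <= G q) -> convex G ->
  0 <= LG -> lipG LG G -> (forall q, Rabs q <= Lw -> Rabs (G q) <= M) ->
  exists S, Lim0 (Phi w a b G) S.
Proof.
  intros Hw HL Hab HG Hp Hc HLG HlG HM.
  assert (HM0 : 0 <= M) by (pose proof (HM 0 ltac:(rewrite Rabs_R0; lra)); pose proof (Rabs_pos (G 0)); lra).
  set (E := fun x => exists h, 0 < h < b - a /\ x = Phi w a b G h).
  assert (Hbd : forall h, 0 < h < b - a -> Phi w a b G h <= (b - a) * M).
  { intros h Hh. unfold Phi.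
    assert (Rabs (RInt (fun x => G (qd w h x)) a (b - h)) <= (b - h - a) * M).
    { apply RI_bound. lra. apply (Gq_cont w Lw); auto; lra. intros; apply HM, (qd_bnd w Lw); auto; lra. }
    apply Rabs_le_between in H. nra. }
  destruct (completeness E) as [Sup [HS1 HS2]].
  { exists ((b - a) * M). intros x [h [Hh ->]]. auto. }
  { exists (Phi w a b G ((b - a) / 2)). exists ((b - a) / 2). split; auto. lra. }
  exists Sup. intros eps Heps.
  assert (Hh0 : exists h0, 0 < h0 < b - a /\ Sup - eps / 2 < Phi w a b G h0).
  { apply NNPP. intros Hn. assert (Sup <= Sup - eps / 2); [|lra].
    apply HS2. intros x [h [Hh ->]]. apply Rnot_lt_le. intros Hlt. apply Hn. exists h. auto. }
  destruct Hh0 as [h0 [Hh0 Hph0]].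
  set (K0 := M + (b - a) * LG * (2 * Lw / h0)).
  assert (HK0 : 0 <= K0).
  { unfold K0. assert (0 <= (b - a) * LG * (2 * Lw / h0)); [|lra].
    apply Rmult_le_pos. apply Rmult_le_pos; lra. apply Rdiv_le_0_compat; lra. }
  set (eta := Rmin (eps / 2 / (K0 + 1)) ((b - a - h0) / 2)).
  assert (Heta1 : eta <= eps / 2 / (K0 + 1)) by apply Rmin_l.
  assert (Heta2 : eta <= (b - a - h0) / 2) by apply Rmin_r.
  assert (Heta : 0 < eta).
  { apply Rmin_glb_lt. apply Rdiv_lt_0_compat; lra. lra. }
  exists eta. split; auto. intros k Hk.
  destruct (archimed (h0 / k)) as [Hz1 Hz2].
  set (z := up (h0 / k)) in *.
  assert (Hpos : 0 < h0 / k) by (apply Rdiv_lt_0_compat; lra).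
  assert (Hz : (1 <= z)%Z) by (apply lt_IZR in Hz1 || idtac; assert (0 < IZR z) by lra; apply lt_IZR in H; lia).
  set (m := (Z.to_nat z - 1)%nat).
  assert (Hm : INR (S m) = IZR z).
  { unfold m. replace (S (Z.to_nat z - 1)) with (Z.to_nat z) by lia. rewrite INR_IZR_INZ. f_equal. lia. }
  assert (Hh'1 : h0 < IZR z * k).
  { apply (Rmult_lt_compat_r k) in Hz1; [|lra]. unfold Rdiv in Hz1. rewrite Rmult_assoc, Rinv_l, Rmult_1_r in Hz1; lra. }
  assert (Hh'2 : IZR z * k <= h0 + k).
  { apply (Rmult_le_compat_r k) in Hz2; [|lra]. unfold Rdiv in Hz2. rewrite Rmult_minus_distr_r, Rmult_assoc, Rinv_l, Rmult_1_r in Hz2; lra. }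
  assert (Hlt : IZR z * k < b - a) by lra.
  assert (SA := stepA w Lw a b G Hw HL Hab HG Hp Hc m k ltac:(lra) ltac:(rewrite Hm; lra)).
  rewrite Hm in SA.
  assert (NC := near_cont w Lw a b G LG M h0 (IZR z * k) Hw HL Hab HG HLG HlG HM ltac:(lra) ltac:(lra) Hlt).
  fold K0 in NC.
  assert (K0 * (IZR z * k - h0) < eps / 2).
  { apply Rle_lt_trans with (K0 * eta). apply Rmult_le_compat_l; lra.
    apply Rle_lt_trans with (K0 * (eps / 2 / (K0 + 1))). apply Rmult_le_compat_l; lra.
    apply (Rmult_lt_reg_r (K0 + 1)); [lra|]. field_simplify; nra. }
  assert (Phi w a b G k <= Sup) by (apply HS1; exists k; split; auto; lra).
  apply Rabs_def1; lra.
Qed.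

Definition CP w a b G := forall eps, 0 < eps -> exists del, 0 < del /\
  forall h k, 0 < h < del -> 0 < k < del -> Rabs (Phi w a b G h - Phi w a b G k) < eps.

Lemma Lim_CP w a b G S : Lim0 (Phi w a b G) S -> CP w a b G.
Proof.
  intros H eps Heps. destruct (H (eps / 2)) as [d [Hd H']]. lra.
  exists d. split; auto. intros h k Hh Hk.
  replace (Phi w a b G h - Phi w a b G k) with ((Phi w a b G h - S) - (Phi w a b G k - S)) by ring.
  eapply Rle_lt_trans. apply Rabs_triang. rewrite Rabs_Ropp.
  pose proof (H' h Hh). pose proof (H' k Hk). lra.
Qed.

Lemma Phi_ext w a b G G' h : (forall q, G q = G' q) -> Phi w a b G h = Phi w a b G' h.
Proof. intros H. unfold Phi. apply RI_ext. intros; apply H. Qed.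

Lemma CP_ext w a b G G' : CP w a b G -> (forall q, G q = G' q) -> CP w a b G'.
Proof.
  intros H E eps Heps. destruct (H eps Heps) as [d [Hd H']]. exists d; split; auto.
  intros. rewrite <- !(Phi_ext w a b G G'); auto.
Qed.

Lemma CP_lin w Lw a b G1 G2 al be : lipg Lw w -> 0 <= Lw ->
  continuity G1 -> continuity G2 -> CP w a b G1 -> CP w a b G2 ->
  CP w a b (fun q => al * G1 q + be * G2 q).
Proof.
  intros Hw HL C1 C2 H1 H2 eps Heps.
  set (e1 := eps / (2 * (Rabs al + Rabs be + 1))).
  assert (He1 : 0 < e1) by (unfold e1; apply Rdiv_lt_0_compat; [lra | pose proof (Rabs_pos al); pose proof (Rabs_pos be); lra]).
  destruct (H1 e1 He1) as [d1 [Hd1 H1']]. destruct (H2 e1 He1) as [d2 [Hd2 H2']].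
  exists (Rmin d1 d2). split. apply Rmin_glb_lt; auto.
  intros h k Hh Hk. pose proof (Rmin_l d1 d2). pose proof (Rmin_r d1 d2).
  assert (E : forall t, 0 < t -> Phi w a b (fun q => al * G1 q + be * G2 q) t = al * Phi w a b G1 t + be * Phi w a b G2 t).
  { intros t Ht. unfold Phi. rewrite RI_plus.
    rewrite !RI_scal; auto; apply (Gq_cont w Lw); auto.
    apply continuity_scal, (Gq_cont w Lw); auto.
    apply continuity_scal, (Gq_cont w Lw); auto. }
  rewrite !E by lra.
  replace (al * Phi w a b G1 h + be * Phi w a b G2 h - (al * Phi w a b G1 k + be * Phi w a b G2 k))
    with (al * (Phi w a b G1 h - Phi w a b G1 k) + be * (Phi w a b G2 h - Phi w a b G2 k)) by ring.
  eapply Rle_lt_trans. apply Rabs_triang. rewrite !Rabs_mult.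
  assert (A1 : Rabs (Phi w a b G1 h - Phi w a b G1 k) < e1) by (apply H1'; lra).
  assert (A2 : Rabs (Phi w a b G2 h - Phi w a b G2 k) < e1) by (apply H2'; lra).
  pose proof (Rabs_pos al). pose proof (Rabs_pos be).
  apply Rle_lt_trans with ((Rabs al + Rabs be) * e1).
  - assert (Rabs al * Rabs (Phi w a b G1 h - Phi w a b G1 k) <= Rabs al * e1) by (apply Rmult_le_compat_l; lra).
    assert (Rabs be * Rabs (Phi w a b G2 h - Phi w a b G2 k) <= Rabs be * e1) by (apply Rmult_le_compat_l; lra).
    lra.
  - unfold e1. apply (Rmult_lt_reg_r (2 * (Rabs al + Rabs be + 1))); [lra|].
    field_simplify; nra.
Qed.

Lemma cont_absc c : continuity (fun q => Rabs (q - c)).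
Proof.
  intros x. apply (continuity_pt_comp (fun q => q - c) Rabs).
  apply continuity_pt_minus. apply derivable_continuous_pt, derivable_pt_id. apply continuity_pt_const; intros ? ?; auto.
  apply Rcontinuity_abs.
Qed.

Lemma CP_abs w Lw a b c : lipg Lw w -> 0 <= Lw -> a < b -> CP w a b (fun q => Rabs (q - c)).
Proof.
  intros Hw HL Hab.
  destruct (stepB w Lw a b (fun q => Rabs (q - c)) 1 (Lw + Rabs c) Hw HL Hab (cont_absc c)) as [S HS].
  - intros; apply Rabs_pos.
  - intros l p q Hl. replace (l * p + (1 - l) * q - c) with (l * (p - c) + (1 - l) * (q - c)) by ring.
    eapply Rle_trans. apply Rabs_triang. rewrite !Rabs_mult, (Rabs_right l), (Rabs_right (1 - l)) by lra. lra.
  - lra.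
  - intros p q. rewrite Rmult_1_l. eapply Rle_trans; [apply Rabs_triang_inv2|]. right; f_equal; ring.
  - intros q Hq. rewrite Rabs_Rabsolu. eapply Rle_trans. apply Rabs_triang. rewrite Rabs_Ropp. lra.
  - eapply Lim_CP; eauto.
Qed.

Lemma CP_approx w Lw a b G : lipg Lw w -> 0 <= Lw -> a < b -> continuity G ->
  (forall eps, 0 < eps -> exists G', continuity G' /\ CP w a b G' /\ forall q, Rabs q <= Lw -> Rabs (G q - G' q) <= eps) ->
  CP w a b G.
Proof.
  intros Hw HL Hab HG H eps Heps.
  set (e1 := eps / (3 * (b - a) + 3)).
  assert (He1 : 0 < e1) by (unfold e1; apply Rdiv_lt_0_compat; lra).
  destruct (H e1 He1) as [G' [C' [CP' HG']]].
  destruct (CP' (eps / 3)) as [d [Hd Hd']]. lra.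
  exists (Rmin d (b - a)). split. apply Rmin_glb_lt; lra.
  intros h k Hh Hk. pose proof (Rmin_l d (b - a)). pose proof (Rmin_r d (b - a)).
  assert (Apx : forall t, 0 < t < b - a -> Rabs (Phi w a b G t - Phi w a b G' t) <= (b - a) * e1).
  { intros t Ht. unfold Phi. rewrite <- RI_minus by (apply (Gq_cont w Lw); auto; lra).
    eapply Rle_trans. apply RI_bound. lra. apply continuity_minus; apply (Gq_cont w Lw); auto; lra.
    intros; apply HG', (qd_bnd w Lw); auto; lra.
    apply Rmult_le_compat_r; lra. }
  assert (A1 := Apx h ltac:(lra)). assert (A2 := Apx k ltac:(lra)).
  assert (A3 : Rabs (Phi w a b G' h - Phi w a b G' k) < eps / 3) by (apply Hd'; lra).
  assert (Hb : (b - a) * e1 < eps / 3).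
  { unfold e1. apply (Rmult_lt_reg_r (3 * (b - a) + 3)); [lra|]. field_simplify; lra. }
  apply Rabs_def2 in A3. apply Rabs_le_between in A1. apply Rabs_le_between in A2.
  apply Rabs_def1; lra.
Qed.

Lemma small_inv d : 0 < d -> exists N, forall n, (N <= n)%nat -> 0 < / (INR n + 1) < d.
Proof.
  intros Hd. destruct (archimed (/ d)) as [H1 _].
  exists (Z.to_nat (up (/ d))). intros n Hn.
  assert (0 < / d) by (apply Rinv_0_lt_compat; lra).
  assert (HZ : (0 <= up (/ d))%Z) by (apply le_IZR; lra).
  assert (IZR (up (/ d)) <= INR n).
  { rewrite INR_IZR_INZ. apply IZR_le. lia. }
  pose proof (pos_INR n).
  split. apply Rinv_0_lt_compat; lra.
  replace d with (/ / d) by (field; lra). apply Rinv_lt_contravar. nra. lra.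
Qed.

Lemma CP_lim w a b G : CP w a b G -> exists l, Lim0 (Phi w a b G) l.
Proof.
  intros H.
  set (u := fun n : nat => (Phi w a b G (/ (INR n + 1)) : R)).
  assert (Hc : Cauchy_crit u).
  { intros eps Heps. destruct (H eps Heps) as [d [Hd H']]. destruct (small_inv d Hd) as [N HN].
    exists N. intros n m Hn Hm. unfold R_dist, u. apply H'; auto. }
  destruct (Rcomplete.R_complete u Hc) as [l Hl]. exists l.
  intros eps Heps. destruct (H (eps / 2)) as [d [Hd H']]. lra.
  exists d. split; auto. intros h Hh.
  destruct (Hl (eps / 2)) as [N1 HN1]. lra.
  destruct (small_inv d Hd) as [N2 HN2].
  set (n := (N1 + N2)%nat).
  assert (A1 := HN1 n ltac:(unfold n; lia)). unfold R_dist in A1.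
  assert (A2 : Rabs (Phi w a b G h - u n) < eps / 2) by (unfold u; apply H'; auto; apply HN2; unfold n; lia).
  replace (Phi w a b G h - l) with ((Phi w a b G h - u n) + (u n - l)) by ring.
  eapply Rle_lt_trans. apply Rabs_triang. lra.
Qed.

Definition hatf d x := (Rabs (x + d) - 2 * Rabs x + Rabs (x - d)) / (2 * d).

Lemma hat_nonneg d x : 0 < d -> 0 <= hatf d x.
Proof.
  intros Hd. unfold hatf. apply Rdiv_le_0_compat; [|lra].
  unfold Rabs; repeat destruct Rcase_abs; lra.
Qed.

Lemma hat_zero d x : 0 < d -> d <= Rabs x -> hatf d x = 0.
Proof.
  intros Hd Hx. unfold hatf. revert Hx.
  unfold Rabs; repeat destruct Rcase_abs; intros; try lra;
  match goal with |- ?A / ?B = 0 => replace A with 0 by lra; field; lra end.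
Qed.

Lemma tele (g : R -> R) N : sum_f_R0 (fun j => g (INR j + 1) - 2 * g (INR j) + g (INR j - 1)) N
  = (g (INR N + 1) - g (INR N)) - (g 0 - g (-1)).
Proof.
  induction N.
  - simpl. replace (0 + 1) with 1 by ring. replace (0 - 1) with (-1) by ring. ring.
  - rewrite tech5, IHN, S_INR. replace (INR N + 1 - 1) with (INR N) by ring. ring.
Qed.

Lemma hat_sum K d n q : 0 < d -> INR (S n) * d = 2 * K -> -K <= q <= K ->
  sum_f_R0 (fun j => hatf d (q + K - INR j * d)) (S n) = 1.
Proof.
  intros Hd HK Hq.
  set (g := fun s => Rabs (q + K - s * d)).
  transitivity (/ (2 * d) * sum_f_R0 (fun j => g (INR j + 1) - 2 * g (INR j) + g (INR j - 1)) (S n)).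
  - rewrite scal_sum. apply sum_eq. intros j _. unfold hatf, g.
    replace (q + K - INR j * d + d) with (q + K - (INR j - 1) * d) by ring.
    replace (q + K - INR j * d - d) with (q + K - (INR j + 1) * d) by ring.
    field. lra.
  - rewrite tele. unfold g.
    rewrite (Rabs_left1 (q + K - (INR (S n) + 1) * d)) by nra.
    rewrite (Rabs_left1 (q + K - INR (S n) * d)) by nra.
    rewrite Rmult_0_l, Rminus_0_r, (Rabs_right (q + K)) by lra.
    rewrite (Rabs_right (q + K - -1 * d)) by lra.
    field. lra.
Qed.

Definition CPC w a b G := continuity G /\ CP w a b G.

Lemma CPC_lin w Lw a b G1 G2 al be : lipg Lw w -> 0 <= Lw ->
  CPC w a b G1 -> CPC w a b G2 -> CPC w a b (fun q => al * G1 q + be * G2 q).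
Proof.
  intros Hw HL [C1 P1] [C2 P2]. split.
  - apply continuity_plus; apply continuity_scal; auto.
  - apply (CP_lin w Lw); auto.
Qed.

Lemma CPC_ext w a b G G' : CPC w a b G -> (forall q, G q = G' q) -> CPC w a b G'.
Proof.
  intros [C P] E. split.
  - intros x. apply (continuity_pt_ext G); auto.
  - eapply CP_ext; eauto.
Qed.

Lemma CPC_abs w Lw a b c : lipg Lw w -> 0 <= Lw -> a < b -> CPC w a b (fun q => Rabs (q - c)).
Proof. intros; split. apply cont_absc. eapply CP_abs; eauto. Qed.

Lemma CPC_hat w Lw a b d c : lipg Lw w -> 0 <= Lw -> a < b -> 0 < d ->
  CPC w a b (fun q => hatf d (q - c)).
Proof.
  intros Hw HL Hab Hd.
  assert (H1 := CPC_lin w Lw a b _ _ (/ (2 * d)) (- 2 / (2 * d)) Hw HL (CPC_abs w Lw a b (c - d) Hw HL Hab) (CPC_abs w Lw a b c Hw HL Hab)).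
  assert (H2 := CPC_lin w Lw a b _ _ 1 (/ (2 * d)) Hw HL H1 (CPC_abs w Lw a b (c + d) Hw HL Hab)).
  eapply CPC_ext. apply H2. intros q. simpl. unfold hatf.
  replace (q - (c - d)) with (q - c + d) by ring. replace (q - (c + d)) with (q - c - d) by ring.
  field. lra.
Qed.

Lemma CPC_sum w Lw a b (f : nat -> R -> R) : lipg Lw w -> 0 <= Lw ->
  (forall j, CPC w a b (f j)) -> forall N, CPC w a b (fun q => sum_f_R0 (fun j => f j q) N).
Proof.
  intros Hw HL Hf N. induction N.
  - simpl. eapply CPC_ext. apply (CPC_lin w Lw a b (f O) (f O) 1 0); auto. intros q; simpl; ring.
  - eapply CPC_ext. apply (CPC_lin w Lw a b _ _ 1 1 Hw HL IHN (Hf (S N))). intros q; simpl. ring.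
Qed.

Lemma CP_all w Lw a b G : lipg Lw w -> 0 <= Lw -> a < b -> continuity G -> CP w a b G.
Proof.
  intros Hw HL Hab HG. apply (CP_approx w Lw); auto.
  intros eps Heps.
  set (K := Lw + 1).
  assert (Hu := Heine G (fun x => -K <= x <= K) (compact_P3 (-K) K) (fun x _ => HG x)).
  destruct (Hu (mkposreal eps Heps)) as [[d0 Hd0] Hd]. simpl in Hd.
  destruct (small_inv (d0 / (2 * K))) as [n Hn]. apply Rdiv_lt_0_compat; unfold K; lra.
  specialize (Hn n (le_n n)).
  set (d := 2 * K * / (INR n + 1)).
  assert (HSn : INR (S n) = INR n + 1) by apply S_INR.
  pose proof (pos_INR n).
  assert (Hdp : 0 < d) by (unfold d; apply Rmult_lt_0_compat; unfold K; lra).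
  assert (Hdd : d < d0).
  { unfold d. apply (Rmult_lt_reg_l (/ (2 * K))). apply Rinv_0_lt_compat; unfold K; lra.
    replace (/ (2 * K) * (2 * K * / (INR n + 1))) with (/ (INR n + 1)) by (field; unfold K; lra).
    replace (/ (2 * K) * d0) with (d0 / (2 * K)) by (field; unfold K; lra). lra. }
  assert (HK : INR (S n) * d = 2 * K) by (rewrite HSn; unfold d; field; lra).
  set (c := fun j : nat => -K + INR j * d).
  exists (fun q => sum_f_R0 (fun j => G (c j) * hatf d (q - c j)) (S n)).
  assert (CC : CPC w a b (fun q => sum_f_R0 (fun j => G (c j) * hatf d (q - c j)) (S n))).
  { apply (CPC_sum w Lw a b (fun j q => G (c j) * hatf d (q - c j)) Hw HL). intros j. eapply CPC_ext. apply (CPC_lin w Lw a b _ _ (G (c j)) 0 Hw HL (CPC_hat w Lw a b d (c j) Hw HL Hab Hdp) (CPC_hat w Lw a b d (c j) Hw HL Hab Hdp)).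
    intros q; simpl; ring. }
  destruct CC as [C1 C2].
  split; [exact C1|]. split; [exact C2|].
  intros q Hq.
  assert (Hq' : -K <= q <= K) by (apply Rabs_le_between in Hq; unfold K; lra).
  assert (HS := hat_sum K d n q Hdp HK Hq').
  assert (E : forall j, q - c j = q + K - INR j * d) by (intros; unfold c; ring).
  assert (HS' : sum_f_R0 (fun i => hatf d (q - c i)) (S n) = 1).
  { rewrite <- HS. apply sum_eq. intros; rewrite E; auto. }
  assert (Sc : forall x, sum_f_R0 (fun j => x * hatf d (q - c j)) (S n) = x).
  { intros x. rewrite (sum_eq _ (fun j => hatf d (q - c j) * x)) by (intros; ring).
    rewrite <- scal_sum, HS'. ring. }
  transitivity (Rabs (sum_f_R0 (fun j => (G q - G (c j)) * hatf d (q - c j)) (S n))).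
  { right. f_equal. rewrite (sum_eq (fun j => (G q - G (c j)) * hatf d (q - c j)) (fun j => G q * hatf d (q - c j) - G (c j) * hatf d (q - c j))).
    rewrite minus_sum. rewrite Sc. reflexivity.
    intros; ring. }
  eapply Rle_trans. apply sum_f_R0_triangle.
  apply Rle_trans with (sum_f_R0 (fun j => eps * hatf d (q - c j)) (S n)).
  - apply sum_Rle. intros j Hj. rewrite Rabs_mult, (Rabs_right (hatf d (q - c j))) by (apply Rle_ge, hat_nonneg; auto).
    destruct (Rle_lt_dec d (Rabs (q - c j))) as [Hf|Hf].
    + rewrite hat_zero by auto. lra.
    + apply Rmult_le_compat_r. apply hat_nonneg; auto. left. apply Hd; auto.
      assert (INR j <= INR (S n)) by (apply le_INR; lia). pose proof (pos_INR j).
      unfold c; split; nra. lra.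
  - rewrite Sc. lra.
Qed.

Lemma lim_all w Lw a b G : lipg Lw w -> 0 <= Lw -> a < b -> continuity G -> exists l, Lim0 (Phi w a b G) l.
Proof. intros. apply CP_lim. apply (CP_all w Lw); auto. Qed.

Lemma Phi_id w Lw a b h : lipg Lw w -> 0 <= Lw -> a < b -> 0 < h < b - a ->
  Rabs (Phi w a b (fun q => q) h - (w b - w a)) <= 3 * Lw * h.
Proof.
  intros Hw HL Hab Hh.
  assert (Cw := lipg_cont Lw w Hw).
  assert (Cs : continuity (fun x => w (x + h))).
  { intros x. apply (continuity_pt_comp (fun x => x + h) w). apply continuity_pt_plus.
    apply derivable_continuous_pt, derivable_pt_id. apply continuity_pt_const; intros ? ?; auto. apply Cw. }
  assert (E1 : Phi w a b (fun q => q) h = / h * (RInt w (b - h) b - RInt w a (a + h))).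
  { unfold Phi, qd. rewrite (RI_ext _ (fun x => / h * (w (x + h) - w x))) by (intros; field; lra).
    rewrite RI_scal by (apply continuity_minus; auto). f_equal.
    rewrite RI_minus by auto. rewrite RI_shift by auto.
    replace (b - h + h) with b by ring.
    assert (X1 := RI_chasles w a (a + h) b Cw). assert (X2 := RI_chasles w a (b - h) b Cw).
    lra. }
  assert (P1 : Rabs (RInt w (b - h) (b - h + h) - h * w (b - h)) <= h * (Lw * h)).
  { apply piece; auto; try lra. intros x Hx. eapply Rle_trans. apply Hw.
    apply Rmult_le_compat_l; auto. rewrite Rabs_right; lra. }
  assert (P2 : Rabs (RInt w a (a + h) - h * w a) <= h * (Lw * h)).
  { apply piece; auto; try lra. intros x Hx. eapply Rle_trans. apply Hw.
    apply Rmult_le_compat_l; auto. rewrite Rabs_right; lra. }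
  replace (b - h + h) with b in P1 by ring.
  assert (P3 : Rabs (w (b - h) - w b) <= Lw * h).
  { eapply Rle_trans. apply Hw. apply Rmult_le_compat_l; auto. rewrite Rabs_left1; lra. }
  rewrite E1.
  replace (/ h * (RInt w (b - h) b - RInt w a (a + h)) - (w b - w a)) with
    (/ h * ((RInt w (b - h) b - h * w (b - h)) - (RInt w a (a + h) - h * w a) + h * (w (b - h) - w b))) by (field; lra).
  rewrite Rabs_mult, Rabs_right by (apply Rle_ge, Rlt_le, Rinv_0_lt_compat; lra).
  apply (Rmult_le_reg_l h). lra. rewrite <- Rmult_assoc, Rinv_r, Rmult_1_l by lra.
  eapply Rle_trans. apply Rabs_triang. eapply Rle_trans. apply Rplus_le_compat_l. rewrite Rabs_mult, Rabs_right by lra.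
  apply Rmult_le_compat_l. lra. apply P3.
  eapply Rle_trans. apply Rplus_le_compat_r. apply Rabs_triang. rewrite Rabs_Ropp. nra.
Qed.

Lemma Lim_idq w Lw a b : lipg Lw w -> 0 <= Lw -> a < b -> Lim0 (Phi w a b (fun q => q)) (w b - w a).
Proof.
  intros Hw HL Hab eps Heps. exists (Rmin (b - a) (eps / (3 * Lw + 1))). split.
  apply Rmin_glb_lt. lra. apply Rdiv_lt_0_compat; lra.
  intros h Hh. pose proof (Rmin_l (b - a) (eps / (3 * Lw + 1))). pose proof (Rmin_r (b - a) (eps / (3 * Lw + 1))).
  eapply Rle_lt_trans. apply (Phi_id w Lw); auto. lra.
  apply Rle_lt_trans with ((3 * Lw + 1) * h). nra.
  apply (Rmult_lt_reg_r (/ (3 * Lw + 1))). apply Rinv_0_lt_compat; lra.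
  replace ((3 * Lw + 1) * h * / (3 * Lw + 1)) with h by (field; lra). unfold Rdiv in *. lra.
Qed.

Lemma Lim0_ext P P' l : (forall h, 0 < h -> P h = P' h) -> Lim0 P l -> Lim0 P' l.
Proof.
  intros E H eps Heps. destruct (H eps Heps) as [d [Hd H']]. exists d; split; auto.
  intros h Hh. rewrite <- E by lra. auto.
Qed.

Lemma lim_pass P1 P2 P3 l1 l2 l3 k E d0 : 0 < d0 -> Lim0 P1 l1 -> Lim0 P2 l2 -> Lim0 P3 l3 ->
  (forall h, 0 < h < d0 -> Rabs (P1 h - P2 h - k * P3 h) <= E) -> Rabs (l1 - l2 - k * l3) <= E.
Proof.
  intros Hd0 H1 H2 H3 HB. apply Rle_plus_epsilon. intros eta Heta.
  set (e := eta / (2 + Rabs k)).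
  assert (He : 0 < e) by (unfold e; apply Rdiv_lt_0_compat; pose proof (Rabs_pos k); lra).
  destruct (H1 e He) as [d1 [Hd1 A1]]. destruct (H2 e He) as [d2 [Hd2 A2]]. destruct (H3 e He) as [d3 [Hd3 A3]].
  set (h := Rmin (Rmin d0 d1) (Rmin d2 d3) / 2).
  assert (Hm : 0 < Rmin (Rmin d0 d1) (Rmin d2 d3)) by (repeat apply Rmin_glb_lt; auto).
  pose proof (Rmin_l (Rmin d0 d1) (Rmin d2 d3)). pose proof (Rmin_r (Rmin d0 d1) (Rmin d2 d3)).
  pose proof (Rmin_l d0 d1). pose proof (Rmin_r d0 d1). pose proof (Rmin_l d2 d3). pose proof (Rmin_r d2 d3).
  assert (B1 := A1 h ltac:(unfold h; lra)). assert (B2 := A2 h ltac:(unfold h; lra)).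
  assert (B3 := A3 h ltac:(unfold h; lra)). assert (B := HB h ltac:(unfold h; lra)).
  replace (l1 - l2 - k * l3) with ((P1 h - P2 h - k * P3 h) - (P1 h - l1) + (P2 h - l2) + k * (P3 h - l3)) by ring.
  eapply Rle_trans. apply Rabs_triang. eapply Rle_trans. apply Rplus_le_compat_r. apply Rabs_triang.
  eapply Rle_trans. apply Rplus_le_compat_r. apply Rplus_le_compat_r. apply Rabs_triang.
  rewrite Rabs_Ropp, Rabs_mult.
  assert (Rabs k * Rabs (P3 h - l3) <= Rabs k * e) by (apply Rmult_le_compat_l; [apply Rabs_pos|lra]).
  assert (e * (2 + Rabs k) = eta) by (unfold e; field; pose proof (Rabs_pos k); lra).
  nra.
Qed.

Lemma cb_deriv phi dphi w Lw a b c F (D : R -> R) :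
  (forall x, derivable_pt_lim phi x (dphi x)) -> lipg Lw w -> 0 <= Lw -> a < b -> 0 < c ->
  (forall t, Lim0 (Phi w a b (fun q => phi (c * (F + t * q)))) (D t)) ->
  derivable_pt_lim D 0 (c * dphi (c * F) * (w b - w a)).
Proof.
  intros Hphi Hw HL Hab Hc HD eps Heps.
  set (C := (b - a) * c * Lw + 1).
  assert (HC : 0 < C) by (unfold C; assert (0 <= (b - a) * c * Lw) by (apply Rmult_le_pos; nra); lra).
  destruct (Hphi (c * F) (eps / (2 * C))) as [[d1 Hd1] H1]. apply Rdiv_lt_0_compat; lra.
  simpl in H1.
  set (del := d1 / (c * Lw + 1)).
  assert (Hdel : 0 < del) by (unfold del; apply Rdiv_lt_0_compat; nra).
  exists (mkposreal del Hdel). simpl. intros t Ht0 Htd.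
  rewrite Rplus_0_l.
  set (k := t * c * dphi (c * F)).
  assert (Hct : 0 <= c * Rabs t * Lw) by (apply Rmult_le_pos; [apply Rmult_le_pos; [lra|apply Rabs_pos]|lra]).
  assert (Hpt : forall q, Rabs q <= Lw ->
    Rabs (phi (c * (F + t * q)) - phi (c * (F + 0 * q)) - k * q) <= eps / (2 * C) * (c * Rabs t * Lw)).
  { intros q Hq.
    replace (c * (F + 0 * q)) with (c * F) by ring. replace (c * (F + t * q)) with (c * F + c * t * q) by ring.
    destruct (Req_dec (c * t * q) 0) as [Hz|Hz].
    - rewrite Hz, Rplus_0_r. unfold k.
      replace (t * c * dphi (c * F) * q) with (dphi (c * F) * (c * t * q)) by ring. rewrite Hz.
      replace (phi (c * F) - phi (c * F) - dphi (c * F) * 0) with 0 by ring. rewrite Rabs_R0.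
      apply Rmult_le_pos. left; apply Rdiv_lt_0_compat; lra. exact Hct.
    - assert (Hu : Rabs (c * t * q) < d1).
      { rewrite !Rabs_mult, (Rabs_right c) by lra.
        apply Rle_lt_trans with (c * Rabs t * Lw). apply Rmult_le_compat_l; [pose proof (Rabs_pos t); nra | auto].
        apply Rle_lt_trans with (c * del * Lw). apply Rmult_le_compat_r; auto. apply Rmult_le_compat_l; lra.
        unfold del. apply (Rmult_lt_reg_r (c * Lw + 1)); [nra|].
        replace (c * (d1 / (c * Lw + 1)) * Lw * (c * Lw + 1)) with (c * Lw * d1) by (field; nra). nra. }
      specialize (H1 (c * t * q) Hz Hu).
      assert (q <> 0) by (intro; apply Hz; subst; ring).
      assert (t <> 0) by (intro; apply Hz; subst; ring).
      replace (phi (c * F + c * t * q) - phi (c * F) - k * q) with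
        (((phi (c * F + c * t * q) - phi (c * F)) / (c * t * q) - dphi (c * F)) * (c * t * q)) by (unfold k; field; repeat split; auto; lra).
      rewrite Rabs_mult. apply Rle_trans with (eps / (2 * C) * Rabs (c * t * q)).
      apply Rmult_le_compat_r. apply Rabs_pos. lra.
      apply Rmult_le_compat_l. left; apply Rdiv_lt_0_compat; lra.
      rewrite !Rabs_mult, (Rabs_right c) by lra. apply Rmult_le_compat_l; auto. pose proof (Rabs_pos t); nra. }
  assert (HB : forall h, 0 < h < b - a ->
    Rabs (Phi w a b (fun q => phi (c * (F + t * q))) h - Phi w a b (fun q => phi (c * (F + 0 * q))) h
      - k * Phi w a b (fun q => q) h) <= (b - a) * (eps / (2 * C) * (c * Rabs t * Lw))).
  { intros h Hh.
    assert (CG : forall s, continuity (fun q => phi (c * (F + s * q)))).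
    { intros s x. apply (continuity_pt_comp (fun q => c * (F + s * q)) phi).
      apply derivable_continuous_pt. reg. apply derivable_continuous_pt. exists (dphi (c * (F + s * x))). apply Hphi. }
    assert (Cq := qd_cont w Lw h Hw HL ltac:(lra)).
    assert (C1 := Gq_cont w Lw h (fun q => phi (c * (F + t * q))) Hw HL ltac:(lra) (CG t)).
    assert (C0 := Gq_cont w Lw h (fun q => phi (c * (F + 0 * q))) Hw HL ltac:(lra) (CG 0)).
    assert (Ck : continuity (fun x => k * qd w h x)) by (apply continuity_scal; auto).
    unfold Phi. rewrite <- RI_scal by auto. rewrite <- RI_minus by auto. rewrite <- RI_minus by (auto; apply continuity_minus; auto).
    eapply Rle_trans. apply RI_bound. lra.
    + apply continuity_minus; auto. apply continuity_minus; auto.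
    + intros x _. apply Hpt. apply (qd_bnd w Lw); auto; lra.
    + apply Rmult_le_compat_r. apply Rmult_le_pos. left; apply Rdiv_lt_0_compat; lra. exact Hct. lra. }
  assert (LP := lim_pass _ _ _ _ _ _ k _ (b - a) ltac:(lra) (HD t) (HD 0) (Lim_idq w Lw a b Hw HL Hab) HB).
  replace ((D t - D 0) / t - c * dphi (c * F) * (w b - w a)) with ((D t - D 0 - k * (w b - w a)) / t) by (unfold k; field; auto).
  unfold Rdiv. rewrite Rabs_mult, Rabs_inv.
  apply (Rmult_lt_reg_r (Rabs t)). apply Rabs_pos_lt; auto.
  rewrite Rmult_assoc, Rinv_l, Rmult_1_r by (apply Rabs_no_R0; auto).
  eapply Rle_lt_trans. apply LP.
  assert (0 < Rabs t) by (apply Rabs_pos_lt; auto).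
  replace ((b - a) * (eps / (2 * C) * (c * Rabs t * Lw))) with (eps * Rabs t * (((b - a) * c * Lw) / (2 * C))) by (field; lra).
  assert (HX : 0 <= (b - a) * c * Lw) by (apply Rmult_le_pos; [apply Rmult_le_pos|]; lra).
  assert ((b - a) * c * Lw / (2 * C) < 1).
  { apply (Rmult_lt_reg_r (2 * C)); [lra|].
    replace ((b - a) * c * Lw / (2 * C) * (2 * C)) with ((b - a) * c * Lw) by (field; lra). unfold C; lra. }
  assert (0 <= (b - a) * c * Lw / (2 * C)) by (apply Rdiv_le_0_compat; lra).
  assert (0 < eps * Rabs t) by (apply Rmult_lt_0_compat; lra). rewrite <- (Rmult_1_r (eps * Rabs t)) at 2. apply Rmult_lt_compat_l; lra.
Qed.

Lemma clamp_lip a b x z : a <= b -> Rabs (Rmax a (Rmin b x) - Rmax a (Rmin b z)) <= Rabs (x - z).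
Proof. intros. unfold Rmax, Rmin; repeat destruct Rle_dec; unfold Rabs; repeat destruct Rcase_abs; lra. Qed.

Lemma clamp_in a b x : a <= b -> a <= Rmax a (Rmin b x) <= b.
Proof. intros. unfold Rmax, Rmin; repeat destruct Rle_dec; lra. Qed.

Lemma clamp_id a b x : a <= x <= b -> Rmax a (Rmin b x) = x.
Proof. intros. unfold Rmax, Rmin; repeat destruct Rle_dec; lra. Qed.

Lemma phi_cont phi dphi : (forall x, derivable_pt_lim phi x (dphi x)) -> continuity phi.
Proof. intros H x. apply derivable_continuous_pt. exists (dphi x). apply H. Qed.

Lemma cbond_core phi dphi v Lv a b F c :
  (forall x, derivable_pt_lim phi x (dphi x)) -> 0 < c -> a < b ->
  (forall x z, a <= x <= b -> a <= z <= b -> Rabs (v x - v z) <= Lv * Rabs (x - z)) ->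
  derivable_pt_lim (fun t => deriv_int (fun s => phi (c * s)) (fun x => F * x + t * v x) a b) 0
    (c * dphi (c * F) * (v b - v a)).
Proof.
  intros Hphi Hc Hab Hv.
  set (w := fun x => v (Rmax a (Rmin b x))).
  set (Lw := Rabs Lv).
  assert (Hw : lipg Lw w).
  { intros x z. unfold w, Lw. eapply Rle_trans. apply Hv; apply clamp_in; lra.
    eapply Rle_trans. apply Rmult_le_compat_r. apply Rabs_pos. apply Rle_abs.
    apply Rmult_le_compat_l. apply Rabs_pos. apply clamp_lip; lra. }
  assert (HL : 0 <= Lw) by apply Rabs_pos.
  assert (Cphi := phi_cont phi dphi Hphi).
  assert (Cw := lipg_cont Lw w Hw).
  assert (Hwa : w a = v a) by (unfold w; rewrite clamp_id; auto; lra).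
  assert (Hwb : w b = v b) by (unfold w; rewrite clamp_id; auto; lra).
  rewrite <- Hwa, <- Hwb.
  apply (cb_deriv phi dphi w Lw a b c F); auto.
  intros t.
  assert (CG : continuity (fun q => phi (c * (F + t * q)))).
  { intros x. apply (continuity_pt_comp (fun q => c * (F + t * q)) phi).
    apply derivable_continuous_pt. reg. apply Cphi. }
  destruct (lim_all w Lw a b _ Hw HL Hab CG) as [l Hl].
  assert (HI : IsDerivInt (fun s => phi (c * s)) (fun x => F * x + t * v x) a b l).
  { apply (isdi _ _ (fun x => F * x + t * w x)); auto.
    - intros x Hx. unfold w. rewrite clamp_id; auto.
    - intros x. apply (continuity_pt_comp (fun s => c * s) phi). apply derivable_continuous_pt. reg. apply Cphi.
    - apply continuity_plus. intros x; apply derivable_continuous_pt; reg. apply continuity_scal; auto.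
    - eapply Lim0_ext; [|exact Hl]. intros h Hh. unfold Phi. apply RI_ext. intros x _.
      unfold qd. f_equal. field. lra. }
  rewrite (deriv_int_eq _ _ _ _ _ HI). exact Hl.
Qed.

Lemma Rls_app l1 l2 : Rlist_sum (l1 ++ l2) = Rlist_sum l1 + Rlist_sum l2.
Proof. induction l1; simpl; [ring|rewrite IHl1; ring]. Qed.

Lemma Rls_zero {A} (f : A -> R) l : (forall x, In x l -> f x = 0) -> Rlist_sum (map f l) = 0.
Proof. induction l; simpl; intros H; auto. rewrite H, IHl; auto. ring. Qed.

Lemma Rls_ext {A} (f g : A -> R) l : (forall x, In x l -> f x = g x) -> Rlist_sum (map f l) = Rlist_sum (map g l).
Proof. induction l; simpl; intros H; auto. rewrite H, IHl; auto. Qed.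

Lemma Rls_plus {A} (f g : A -> R) l : Rlist_sum (map (fun x => f x + g x) l) = Rlist_sum (map f l) + Rlist_sum (map g l).
Proof. induction l; simpl; [ring|rewrite IHl; ring]. Qed.

Lemma Rls_minus {A} (f g : A -> R) l : Rlist_sum (map (fun x => f x - g x) l) = Rlist_sum (map f l) - Rlist_sum (map g l).
Proof. induction l; simpl; [ring|rewrite IHl; ring]. Qed.

Lemma Rls_swap {A B} (f : A -> B -> R) l1 l2 :
  Rlist_sum (map (fun i => Rlist_sum (map (fun r => f i r) l2)) l1) =
  Rlist_sum (map (fun r => Rlist_sum (map (fun i => f i r) l1)) l2).
Proof.
  induction l1; simpl.
  - symmetry. apply Rls_zero. auto.
  - rewrite IHl1. rewrite <- Rls_plus. reflexivity.
Qed.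

Definition SS (n : nat) (f : nat -> R) := Rlist_sum (map f (seq 0 n)).

Lemma SS_S n f : SS (S n) f = SS n f + f n.
Proof. unfold SS. rewrite seq_S, map_app, Rls_app. simpl. ring. Qed.

Lemma tele1 (U : nat -> R) n r : SS r (fun k => U (k + S n)%nat - U (k + n)%nat) = U (r + n)%nat - U n.
Proof.
  induction r. - unfold SS; simpl. ring.
  - rewrite SS_S, IHr. replace (r + S n)%nat with (S r + n)%nat by lia. ring.
Qed.

Lemma tele2 (U : nat -> R) r n : SS n (fun k => U (k + r)%nat - U k) = SS r (fun k => U (k + n)%nat - U k).
Proof.
  induction n.
  - unfold SS at 1. simpl. symmetry. unfold SS. apply Rls_zero. intros; rewrite Nat.add_0_r; ring.
  - rewrite SS_S, IHn. unfold SS.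
    assert (E : Rlist_sum (map (fun k => U (k + S n)%nat - U k) (seq 0 r)) =
      Rlist_sum (map (fun k => U (k + n)%nat - U k) (seq 0 r)) + Rlist_sum (map (fun k => U (k + S n)%nat - U (k + n)%nat) (seq 0 r))).
    { rewrite <- Rls_plus. apply Rls_ext. intros; ring. }
    rewrite E. fold (SS r (fun k => U (k + S n)%nat - U (k + n)%nat)). rewrite tele1.
    replace (r + n)%nat with (n + r)%nat by lia. ring.
Qed.

Lemma shift_sum (U : nat -> R) (c : R) L r : (r <= L)%nat ->
  (forall k, (k < r)%nat -> U k = 0) -> (forall k, (L - r <= k < L)%nat -> U k = 0) ->
  SS L (fun k => if (k + r <? L)%nat then c * (U (k + r)%nat - U k) else 0) = 0.
Proof.
  intros HrL H1 H2. unfold SS.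
  replace L with ((L - r) + r)%nat at 1 by lia.
  rewrite seq_app, map_app, Rls_app.
  rewrite (Rls_zero _ (seq (0 + (L - r)) r)).
  2:{ intros x Hx. apply in_seq in Hx. destruct (Nat.ltb_spec (x + r) L); [exfalso; lia|auto]. }
  rewrite (Rls_ext _ (fun k => c * (U (k + r)%nat - U k))).
  2:{ intros x Hx. apply in_seq in Hx. destruct (Nat.ltb_spec (x + r) L); [auto|exfalso; lia]. }
  rewrite (Rls_ext _ (fun k => c * (U (k + r)%nat - U k) + 0 * 0)) by (intros; ring).
  assert (Hm : forall l, Rlist_sum (map (fun k => c * (U (k + r)%nat - U k)) l) = c * Rlist_sum (map (fun k => U (k + r)%nat - U k) l)).
  { induction l; simpl; [ring|rewrite IHl; ring]. }
  rewrite (Rls_ext _ (fun k => c * (U (k + r)%nat - U k))) by (intros; ring).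
  rewrite Hm. fold (SS (L - r) (fun k => U (k + r)%nat - U k)). rewrite tele2.
  unfold SS. rewrite Rls_zero. ring.
  intros x Hx. apply in_seq in Hx. rewrite (H1 x) by lia. rewrite (H2 (x + (L - r))%nat) by lia. ring.
Qed.

Lemma dpl_ext f g x l l' : (forall t, f t = g t) -> l = l' -> derivable_pt_lim f x l -> derivable_pt_lim g x l'.
Proof. intros E El H eps He. destruct (H eps He) as [d Hd]. exists d. intros. rewrite <- !E, <- El. auto. Qed.

Lemma dpl_list {A} (f : R -> A -> R) f' l :
  (forall x, In x l -> derivable_pt_lim (fun t => f t x) 0 (f' x)) ->
  derivable_pt_lim (fun t => Rlist_sum (map (f t) l)) 0 (Rlist_sum (map f' l)).
Proof.
  induction l; intros H; simpl.
  - apply derivable_pt_lim_const.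
  - apply (derivable_pt_lim_plus (fun t => f t a) (fun t => Rlist_sum (map (f t) l))).
    apply H; simpl; auto. apply IHl. intros; apply H; simpl; auto.
Qed.

Lemma affine_d al be : derivable_pt_lim (fun t => al + t * be) 0 be.
Proof.
  apply (dpl_ext (plus_fct (fun _ => al) (mult_real_fct be id)) _ 0 (0 + be * 1)).
  intros; unfold plus_fct, mult_real_fct, id; ring. ring.
  apply derivable_pt_lim_plus. apply derivable_pt_lim_const. apply derivable_pt_lim_scal, derivable_pt_lim_id.
Qed.

Lemma IZR_diff i r : IZR (i + Z.of_nat r) - IZR i = INR r.
Proof. rewrite plus_IZR, INR_IZR_INZ. ring. Qed.

Lemma ebond_d phi dphi v F i r : (forall x, derivable_pt_lim phi x (dphi x)) ->
  derivable_pt_lim (fun t => e_bond phi (fun x => F * x + t * v x) i r) 0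
    (dphi (INR r * F) * (v (IZR (i + Z.of_nat r)) - v (IZR i))).
Proof.
  intros Hphi.
  set (al := F * INR r). set (be := v (IZR (i + Z.of_nat r)) - v (IZR i)).
  apply (dpl_ext (comp phi (fun t => al + t * be)) _ 0 (dphi (al + 0 * be) * be)).
  - intros t. unfold comp, e_bond, al, be. f_equal. rewrite <- (IZR_diff i r). ring.
  - unfold al. f_equal. f_equal. ring.
  - apply derivable_pt_lim_comp. apply affine_d. apply Hphi.
Qed.

Lemma cbond_d phi dphi v F N i r L : (forall x, derivable_pt_lim phi x (dphi x)) ->
  (forall x z, 0 <= x <= INR N -> 0 <= z <= INR N -> Rabs (v x - v z) <= L * Rabs (x - z)) ->
  (1 <= r)%nat -> bond_in_c N i r = true ->
  derivable_pt_lim (fun t => c_bond phi (fun x => F * x + t * v x) i r) 0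
    (dphi (INR r * F) * (v (IZR (i + Z.of_nat r)) - v (IZR i))).
Proof.
  intros Hphi HL Hr Hb. unfold bond_in_c in Hb. apply andb_prop in Hb. destruct Hb as [H1 H2].
  apply Z.leb_le in H1. apply Z.leb_le in H2.
  assert (Hr0 : 0 < INR r) by (apply lt_0_INR; lia).
  assert (Ha : 0 <= IZR i) by (apply IZR_le; lia).
  assert (Hbn : IZR (i + Z.of_nat r) <= INR N) by (rewrite INR_IZR_INZ; apply IZR_le; lia).
  assert (Hab : IZR i < IZR (i + Z.of_nat r)) by (pose proof (IZR_diff i r); lra).
  unfold c_bond.
  apply (dpl_ext (mult_real_fct (/ INR r) (fun t => deriv_int (fun s => phi (INR r * s)) (fun x => F * x + t * v x) (IZR i) (IZR (i + Z.of_nat r)))) _ 0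
    (/ INR r * (INR r * dphi (INR r * F) * (v (IZR (i + Z.of_nat r)) - v (IZR i))))).
  - intros; reflexivity.
  - field. lra.
  - apply derivable_pt_lim_scal. apply (cbond_core phi dphi v L); auto.
    intros x z Hx Hz. apply HL; lra.
Qed.

Theorem proposition3p2 (N Rc : nat) (phi dphi : R -> R) (F : R) (v : R -> R) :
  (1 <= N)%nat -> (1 <= Rc)%nat ->
  (forall x, derivable_pt_lim phi x (dphi x)) -> continuity dphi ->
  0 < F -> in_U0 N Rc v ->
  derivable_pt_lim (fun t => E_ecc phi N Rc (fun x => F * x + t * v x)) 0 0.
Proof.
  intros HN HRc Hphi Hdphi HF [[L HL] HD].
  set (M := (Z.of_nat N + Z.of_nat Rc)%Z).
  set (T := fun (i : Z) (r : nat) => if (i + Z.of_nat r <? M)%Z then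
        dphi (INR r * F) * (v (IZR (i + Z.of_nat r)) - v (IZR i)) else 0).
  assert (Hsum : Rlist_sum (map (fun i => Rlist_sum (map (fun r => T i r) (seq 1 Rc))) (Zrange (- M + 1) M)) = 0).
  { rewrite Rls_swap. apply Rls_zero. intros r Hr. apply in_seq in Hr.
    unfold Zrange. rewrite map_map.
    set (lo := (- M + 1)%Z).
    set (Lz := Z.to_nat (M - lo)).
    set (U := fun k : nat => v (IZR (lo + Z.of_nat k))).
    rewrite (Rls_ext _ (fun k => if (k + r <? Lz)%nat then dphi (INR r * F) * (U (k + r)%nat - U k) else 0)).
    + apply shift_sum.
      * unfold Lz, lo, M. lia.
      * intros k Hk. unfold U. apply HD. unfold in_ID, lo, M. lia.
      * intros k Hk. unfold U. apply HD. unfold in_ID, Lz, lo, M in *. lia.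
    + intros k Hk. apply in_seq in Hk. unfold T.
      destruct (Z.ltb_spec (lo + Z.of_nat k + Z.of_nat r) M); destruct (Nat.ltb_spec (k + r) Lz).
      * unfold U. rewrite Nat2Z.inj_add, Z.add_assoc. reflexivity.
      * exfalso. unfold Lz, lo, M in *. lia.
      * exfalso. unfold Lz, lo, M in *. lia.
      * reflexivity. }
  enough (Hd : derivable_pt_lim (fun t => E_ecc phi N Rc (fun x => F * x + t * v x)) 0
     (Rlist_sum (map (fun i => Rlist_sum (map (fun r => T i r) (seq 1 Rc))) (Zrange (- M + 1) M)))) by (rewrite Hsum in Hd; exact Hd).
  { unfold E_ecc. fold M. apply dpl_list. intros i Hi. apply dpl_list. intros r Hr.
    apply in_seq in Hr. unfold T.
    destruct (i + Z.of_nat r <? M)%Z.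
    + destruct (bond_in_c N i r) eqn:Hb.
      * apply (cbond_d phi dphi v F N i r L); auto. lia.
      * apply ebond_d; auto.
    + apply derivable_pt_lim_const. }
Qed.
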